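(* Let $Y$, $\Phi$, $A$, $f$, $k$, $R$ and $A_k=R(A)$ be as in the standing setup (in particular $R$ is one-to-one on $A$), and let $E:\mathbb{R}^k\to Y$ be a continuous map with $E(R(u))=u$ for all $u\in A$ and $R(E(x))=x$ for all $x\in A_k$. Assume moreover that $A$ is attracting with respect to an open neighborhood $U\supset A$, in the sense that for every bounded set $V\subset U$ one has $\sup_{v\in V}\operatorname{dist}(\Phi^m(v),A)\to0$ as $m\to\infty$. Let $Q\subset\mathbb{R}^k$ be compact with $A_k\subset Q$ and $E(Q)\subset U$. For $m\ge1$ let $\varphi_m=R\circ\Phi^m\circ E$, let $A_Q^m=\bigcap_{j\ge0}\varphi_m^j(Q)$, and let $A_Q^\infty=\bigcap_{m\ge1}A_Q^m$. Then $A_k=A_Q^\infty$.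
   Context: Standing setup: $Y$ is a Banach space, $\Phi:Y\to Y$ is Lipschitz continuous, $A\subset Y$ is compact with $\Phi(A)=A$, $f:Y\to\mathbb{R}$ is Lipschitz, $k\ge1$ is an integer, and $R:Y\to\mathbb{R}^k$ is $R(u)=(f(u),f(\Phi(u)),\ldots,f(\Phi^{k-1}(u)))^T$. $\Phi^m$ denotes the $m$-fold composition of $\Phi$. $\varphi_m^j(Q)$ is the image of $Q$ under the $j$-fold composition of $\varphi_m$, with $\varphi_m^0(Q)=Q$. $\operatorname{dist}(v,A)=\inf_{a\in A}\|v-a\|_Y$. *)

(* Defs.v *)
From Stdlib Require Import Reals Lra List.
From Stdlib Require Fin.
Open Scope R_scope.

Record Banach := {
  BS :> Type;
  bzero : BS;
  badd : BS -> BS -> BS;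
  bopp : BS -> BS;
  bscal : R -> BS -> BS;
  bnorm : BS -> R;
  badd_assoc : forall x y z, badd x (badd y z) = badd (badd x y) z;
  badd_comm : forall x y, badd x y = badd y x;
  badd_0 : forall x, badd x bzero = x;
  badd_opp : forall x, badd x (bopp x) = bzero;
  bscal_1 : forall x, bscal 1 x = x;
  bscal_assoc : forall a b x, bscal a (bscal b x) = bscal (a * b) x;
  bscal_distr_r : forall a b x, bscal (a + b) x = badd (bscal a x) (bscal b x);
  bscal_distr_l : forall a x y, bscal a (badd x y) = badd (bscal a x) (bscal a y);
  bnorm_eq0 : forall x, bnorm x = 0 -> x = bzero;
  bnorm_scal : forall a x, bnorm (bscal a x) = Rabs a * bnorm x;
  bnorm_triangle : forall x y, bnorm (badd x y) <= bnorm x + bnorm y;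
  bcomplete : forall u : nat -> BS,
    (forall eps, eps > 0 -> exists N, forall n m, (n >= N)%nat -> (m >= N)%nat ->
        bnorm (badd (u n) (bopp (u m))) < eps) ->
    exists l, forall eps, eps > 0 -> exists N, forall n, (n >= N)%nat ->
        bnorm (badd (u n) (bopp l)) < eps
}.

Arguments bnorm {_}.
Arguments badd {_}.
Arguments bopp {_}.

Definition bdist {Y : Banach} (x y : Y) : R := bnorm (badd x (bopp y)).

Definition Rk (k : nat) := Fin.t k -> R.

Definition lipschitz {Y : Banach} (g : Y -> Y) : Prop :=
  exists L, forall u v, bdist (g u) (g v) <= L * bdist u v.

Definition lipschitz_real {Y : Banach} (g : Y -> R) : Prop :=
  exists L, forall u v, Rabs (g u - g v) <= L * bdist u v.

Definition open_Y {Y : Banach} (O : Y -> Prop) : Prop :=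
  forall x, O x -> exists r, r > 0 /\ forall y, bdist y x < r -> O y.

Definition open_Rk {k : nat} (O : Rk k -> Prop) : Prop :=
  forall x, O x -> exists r, r > 0 /\
    forall y : Rk k, (forall i, Rabs (y i - x i) < r) -> O y.

Definition compact_Y {Y : Banach} (A : Y -> Prop) : Prop :=
  forall (I : Type) (C : I -> Y -> Prop), (forall i, open_Y (C i)) ->
    (forall x, A x -> exists i, C i x) ->
    exists l : list I, forall x, A x -> exists i, In i l /\ C i x.

Definition compact_Rk {k : nat} (A : Rk k -> Prop) : Prop :=
  forall (I : Type) (C : I -> Rk k -> Prop), (forall i, open_Rk (C i)) ->
    (forall x, A x -> exists i, C i x) ->
    exists l : list I, forall x, A x -> exists i, In i l /\ C i x.

Definition continuous_Rk_Y {k : nat} {Y : Banach} (E : Rk k -> Y) : Prop :=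
  forall x eps, eps > 0 -> exists delta, delta > 0 /\
    forall y : Rk k, (forall i, Rabs (y i - x i) < delta) -> bdist (E y) (E x) < eps.

Definition bounded_Y {Y : Banach} (V : Y -> Prop) : Prop :=
  exists C, forall v, V v -> bnorm v <= C.

(* dist(x, A) <= r, i.e. inf_{a in A} ||x - a|| <= r (written out). *)
Definition dist_le {Y : Banach} (x : Y) (A : Y -> Prop) (r : R) : Prop :=
  forall d, d > 0 -> exists a, A a /\ bdist x a < r + d.

Definition iter {T : Type} (m : nat) (g : T -> T) : T -> T := fun x => Nat.iter m g x.

Definition delay {Y : Banach} (k : nat) (Phi : Y -> Y) (f : Y -> R) (u : Y) : Rk k :=
  fun i => f (iter (proj1_sig (Fin.to_nat i)) Phi u).

Definition img {S T : Type} (g : S -> T) (P : S -> Prop) : T -> Prop :=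
  fun y => exists x, P x /\ g x = y.

(* Main.v *)
Require Import Defs.
From Stdlib Require Import Reals.
From Stdlib Require Import Lra Lia List Classical FunctionalExtensionality.
Open Scope R_scope.

Lemma bscal0 (Y : Banach) (x : Y) : bscal Y 0 x = bzero Y.
Proof.
  assert (h : bscal Y 0 x = badd (bscal Y 0 x) (bscal Y 0 x)).
  { rewrite <- bscal_distr_r. f_equal. ring. }
  rewrite <- (badd_opp _ (bscal Y 0 x)).
  rewrite h at 2.
  rewrite <- badd_assoc, badd_opp, badd_0. reflexivity.
Qed.

Lemma bnorm0 (Y : Banach) : bnorm (bzero Y) = 0.
Proof.
  rewrite <- (bscal0 Y (bzero Y)), bnorm_scal, Rabs_R0. ring.
Qed.

Lemma bopp_scal (Y : Banach) (x : Y) : bopp x = bscal Y (-1) x.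
Proof.
  assert (h : badd x (bscal Y (-1) x) = bzero Y).
  { rewrite <- (bscal_1 _ x) at 1. rewrite <- bscal_distr_r.
    replace (1 + -1) with 0 by ring. apply bscal0. }
  rewrite <- (badd_0 _ (bopp x)), <- h, badd_assoc, (badd_comm _ (bopp x) x),
    badd_opp, badd_comm, badd_0. reflexivity.
Qed.

Lemma bnorm_opp (Y : Banach) (x : Y) : bnorm (bopp x) = bnorm x.
Proof.
  rewrite bopp_scal, bnorm_scal.
  replace (Rabs (-1)) with 1 by (unfold Rabs; destruct (Rcase_abs (-1)); lra).
  ring.
Qed.

Lemma bnorm_nonneg (Y : Banach) (x : Y) : 0 <= bnorm x.
Proof.
  pose proof (bnorm_triangle _ x (bopp x)) as H.
  rewrite badd_opp, bnorm0, bnorm_opp in H. lra.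
Qed.

Lemma bdist_nonneg (Y : Banach) (x y : Y) : 0 <= bdist x y.
Proof. unfold bdist. apply bnorm_nonneg. Qed.

Lemma bsub_add (Y : Banach) (a b : Y) : badd (badd a (bopp b)) b = a.
Proof.
  rewrite <- badd_assoc, (badd_comm _ (bopp b) b), badd_opp, badd_0. reflexivity.
Qed.

Lemma iter_S {T : Type} (n : nat) (g : T -> T) (x : T) :
  iter (S n) g x = g (iter n g x).
Proof. reflexivity. Qed.

Lemma iter_0 {T : Type} (g : T -> T) (x : T) : iter 0 g x = x.
Proof. reflexivity. Qed.

Lemma lip_iter (Y : Banach) (Phi : Y -> Y) (Lp : R) : 0 <= Lp ->
  (forall u v, bdist (Phi u) (Phi v) <= Lp * bdist u v) ->
  forall n u v, bdist (iter n Phi u) (iter n Phi v) <= Lp ^ n * bdist u v.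
Proof.
  intros HL H n; induction n; intros u v.
  - rewrite !iter_0. simpl. lra.
  - rewrite !iter_S. eapply Rle_trans; [apply H|]. simpl.
    rewrite Rmult_assoc. apply Rmult_le_compat_l; auto.
Qed.

Lemma delay_lip (Y : Banach) (Phi : Y -> Y) (f : Y -> R) (k : nat) :
  lipschitz Phi -> lipschitz_real f ->
  exists Kc, 0 <= Kc /\ forall i y a,
    Rabs (delay k Phi f y i - delay k Phi f a i) <= Kc * bdist y a.
Proof.
  intros [L HL] [Lf HLf].
  set (Lp := Rmax L 0). set (B := Rmax Lp 1). set (Lf' := Rmax Lf 0).
  assert (HLp : 0 <= Lp) by apply Rmax_r.
  assert (HB : 1 <= B) by apply Rmax_r.
  assert (HLpB : Lp <= B) by apply Rmax_l.
  assert (HLf' : 0 <= Lf') by apply Rmax_r.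
  assert (HP : forall u v, bdist (Phi u) (Phi v) <= Lp * bdist u v).
  { intros u v. eapply Rle_trans; [apply HL|].
    apply Rmult_le_compat_r; [apply bdist_nonneg|]. unfold Lp, Lf'; apply Rmax_l. }
  exists (Lf' * B ^ k). split.
  { apply Rmult_le_pos; auto. apply pow_le; lra. }
  intros i y a. unfold delay. destruct (Fin.to_nat i) as [n Hn]. simpl.
  eapply Rle_trans; [apply HLf|].
  assert (H1 : Lf * bdist (iter n Phi y) (iter n Phi a) <=
               Lf' * bdist (iter n Phi y) (iter n Phi a)).
  { apply Rmult_le_compat_r; [apply bdist_nonneg|]. unfold Lp, Lf'; apply Rmax_l. }
  eapply Rle_trans; [apply H1|].
  rewrite Rmult_assoc. apply Rmult_le_compat_l; auto.
  eapply Rle_trans; [apply (lip_iter Y Phi Lp HLp HP)|].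
  apply Rmult_le_compat_r; [apply bdist_nonneg|].
  apply Rle_trans with (B ^ n).
  - apply pow_incr; lra.
  - apply Rle_pow; auto; lia.
Qed.

Definition posmin (l : list R) : R :=
  fold_right (fun r acc => if Rlt_dec 0 r then Rmin r acc else acc) 1 l.

Lemma posmin_pos l : 0 < posmin l.
Proof.
  induction l; simpl; [lra|]. destruct (Rlt_dec 0 a); auto. apply Rmin_pos; auto.
Qed.

Lemma posmin_le l r : In r l -> 0 < r -> posmin l <= r.
Proof.
  induction l; simpl; [tauto|]. intros [->|Hin] Hr.
  - destruct (Rlt_dec 0 r); [apply Rmin_l|lra].
  - destruct (Rlt_dec 0 a); auto.
    eapply Rle_trans; [apply Rmin_r|auto].
Qed.

Lemma maxl_le l r : In r l -> r <= fold_right Rmax 0 l.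
Proof.
  induction l; simpl; [tauto|]. intros [->|Hin].
  - apply Rmax_l.
  - eapply Rle_trans; [apply IHl; auto|apply Rmax_r].
Qed.

Lemma abs_tri3 (p q s : R) : Rabs (p - s) <= Rabs (p - q) + Rabs (q - s).
Proof. replace (p - s) with ((p - q) + (q - s)) by ring. apply Rabs_triang. Qed.

Lemma bounded_image (Y : Banach) (k : nat) (E : Rk k -> Y) (Q : Rk k -> Prop) :
  compact_Rk Q -> continuous_Rk_Y E ->
  exists C, forall z, Q z -> bnorm (E z) <= C.
Proof.
  intros HQ HE.
  destruct (HQ R (fun r z => bnorm (E z) < r)) as [l Hl].
  - intros r z Hz. destruct (HE z (r - bnorm (E z))) as [d [Hd Hd']]; [lra|].
    exists d. split; auto. intros y Hy. specialize (Hd' y Hy).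
    pose proof (bnorm_triangle _ (badd (E y) (bopp (E z))) (E z)) as T.
    rewrite bsub_add in T. unfold bdist in Hd'. lra.
  - intros z _. exists (bnorm (E z) + 1). lra.
  - exists (fold_right Rmax 0 l). intros z Hz.
    destruct (Hl z Hz) as [r [Hr Hr']]. pose proof (maxl_le l r Hr). lra.
Qed.

Lemma surj_iter (Y : Banach) (Phi : Y -> Y) (A : Y -> Prop) :
  (forall a, A a -> exists u, A u /\ Phi u = a) ->
  forall m a, A a -> exists b, A b /\ iter m Phi b = a.
Proof.
  intros Hs m; induction m; intros a Ha.
  - exists a. split; auto.
  - destruct (Hs a Ha) as [b1 [Hb1 Hb1']].
    destruct (IHm b1 Hb1) as [c [Hc Hc']].
    exists c. split; auto. rewrite iter_S, Hc'. auto.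
Qed.

Theorem mainTheorem8 (Y : Banach) (Phi : Y -> Y) (A : Y -> Prop) (f : Y -> R)
  (k : nat) (E : Rk k -> Y) (U : Y -> Prop) (Q : Rk k -> Prop) :
  lipschitz Phi ->
  compact_Y A ->
  (forall u, A u -> A (Phi u)) ->
  (forall a, A a -> exists u, A u /\ Phi u = a) ->
  lipschitz_real f ->
  (1 <= k)%nat ->
  (forall u v, A u -> A v -> delay k Phi f u = delay k Phi f v -> u = v) ->
  continuous_Rk_Y E ->
  (forall u, A u -> E (delay k Phi f u) = u) ->
  (forall x, img (delay k Phi f) A x -> delay k Phi f (E x) = x) ->
  open_Y U ->
  (forall u, A u -> U u) ->
  (forall V : Y -> Prop, bounded_Y V -> (forall v, V v -> U v) ->
     forall eps, eps > 0 -> exists M, forall m, (m >= M)%nat ->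
       forall v, V v -> dist_le (iter m Phi v) A eps) ->
  compact_Rk Q ->
  (forall x, img (delay k Phi f) A x -> Q x) ->
  (forall x, Q x -> U (E x)) ->
  forall x : Rk k,
    img (delay k Phi f) A x <->
    (forall m, (1 <= m)%nat -> forall j,
       iter j (img (fun z => delay k Phi f (iter m Phi (E z)))) Q x).
Proof.
  intros HPhi HA HAinv Hsurj Hf Hk Hinj HEc HE HRE HU HAU Hatt HQ HAQ HQU x.
  destruct (delay_lip Y Phi f k HPhi Hf) as [Kc [HKc HK]].
  split.
  - intros [a [Ha Hx]] m Hm j. subst x. revert a Ha. induction j; intros a Ha.
    + rewrite iter_0. apply HAQ. exists a; auto.
    + rewrite iter_S. destruct (surj_iter Y Phi A Hsurj m a Ha) as [b [Hb Hb']].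
      exists (delay k Phi f b). split; [apply IHj; auto|].
      cbv beta. rewrite (HE b Hb), Hb'. reflexivity.
  - intros H. apply NNPP; intro Hn.
    set (R0 := delay k Phi f).
    destruct (HA R (fun r y => 0 < r /\ exists i, r < Rabs (R0 y i - x i))) as [l Hl].
    + intros r y [Hr [i Hi]].
      set (d := Rabs (R0 y i - x i) - r).
      exists (d / (Kc + 1)). split.
      { apply Rdiv_lt_0_compat; unfold d; lra. }
      intros y' Hy'. split; auto. exists i.
      pose proof (HK i y' y) as K1. pose proof (bdist_nonneg _ y' y) as Hb.
      assert (H2 : (Kc + 1) * bdist y' y < d).
      { replace d with ((Kc + 1) * (d / (Kc + 1))) by (field; lra).
        apply Rmult_lt_compat_l; lra. }
      pose proof (abs_tri3 (R0 y i) (R0 y' i) (x i)) as T.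
      rewrite (Rabs_minus_sym (R0 y i) (R0 y' i)) in T. unfold R0 in *. unfold d in H2. nra.
    + intros a Ha.
      assert (Hne : exists i, R0 a i <> x i).
      { apply NNPP; intro Hc. apply Hn. exists a. split; auto.
        apply functional_extensionality. intro i.
        apply NNPP; intro Hi. apply Hc. exists i. auto. }
      destruct Hne as [i Hi].
      exists (Rabs (R0 a i - x i) / 2).
      assert (0 < Rabs (R0 a i - x i)) by (apply Rabs_pos_lt; lra).
      split; [lra|]. exists i. lra.
    + set (r0 := posmin l).
      assert (Hr0 : 0 < r0) by apply posmin_pos.
      assert (Hsep : forall a, A a -> exists i, r0 < Rabs (R0 a i - x i)).
      { intros a Ha. destruct (Hl a Ha) as [r [Hr [Hrp [i Hi]]]].
        exists i. pose proof (posmin_le l r Hr Hrp). unfold r0. lra. }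
      destruct (bounded_image Y k E Q HQ HEc) as [C HC].
      set (eps := r0 / (2 * (Kc + 1))).
      assert (Heps : eps > 0) by (unfold eps; apply Rdiv_lt_0_compat; lra).
      destruct (Hatt (fun v => exists z, Q z /\ E z = v)) with (eps := eps)
        as [M HM]; auto.
      { exists C. intros v [z [Hz <-]]. auto. }
      { intros v [z [Hz <-]]. auto. }
      specialize (H (S M) ltac:(lia) 1%nat).
      rewrite iter_S, iter_0 in H. destruct H as [z [Hz Hgz]].
      cbv beta in Hgz.
      destruct (HM (S M) ltac:(lia) (E z) (ex_intro _ z (conj Hz eq_refl)) eps Heps)
        as [a [Ha Hd]].
      destruct (Hsep a Ha) as [i Hi].
      rewrite <- Hgz in Hi. fold R0 in Hi.
      pose proof (HK i (iter (S M) Phi (E z)) a) as K1. fold R0 in K1.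
      rewrite Rabs_minus_sym in Hi.
      set (b := bdist (iter (S M) Phi (E z)) a) in *.
      assert (Hb0 : 0 <= b) by apply bdist_nonneg.
      assert (He2 : eps + eps = r0 / (Kc + 1)) by (unfold eps; field; lra).
      assert (H3 : (Kc + 1) * b < (Kc + 1) * (r0 / (Kc + 1))).
      { apply Rmult_lt_compat_l; lra. }
      replace ((Kc + 1) * (r0 / (Kc + 1))) with r0 in H3 by (field; lra).
      nra.
Qed.
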